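(* For every integer $m\ge 3$, the matrix $M_m$ defined below is $3$-decodable (whatever maximizing index $i$ is chosen at each step of the recursion).
   Context: Binary matrices $M_m$ with $m$ rows are defined recursively; write $c(\ell)$ for the number of columns of $M_\ell$, $I_3$ for the $3\times 3$ identity matrix. Let $M_3=[\,I_3\mid \mathbf{1}\,]$ ($3\times 4$, $\mathbf{1}$ the all-ones column). Let $M_4=\begin{bmatrix}\mathbf{0}_{1\times 3} & \mathbf{1}_{1\times 4}\\ I_3 & M_3\end{bmatrix}$ ($4\times 7$). For $m\ge 5$, choose $i\in\{2,\dots,m-3\}$ maximizing $i\cdot c(m-i)$, put $c=c(m-i)$, and let $M_m=[\,L\mid R\,]$, where $L$ is the $m\times 3$ matrix whose first $m-3$ rows are zero and whose last $3$ rows form $I_3$, and $R$ is the $m\times ic$ matrix whose first $i$ rows are such that row $r$ ($1\le r\le i$) has ones exactly in columns $(r-1)c+1,\dots,rc$, and whose last $m-i$ rows form $[\,M_{m-i}\ M_{m-i}\ \cdots\ M_{m-i}\,]$ ($i$ copies side by side). For a binary matrix $M$ and a nonempty set $S$ of its columns, $S$ is a stopping set if the submatrix formed by $S$ has no row with exactly one $1$; $s(M)$ is the minimum size of a stopping set ($+\infty$ if none); $M$ is $d$-decodable if $s(M)\ge d+1$. *)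

(* Defs.v *)
(* All row/column indices are 0-based. *)
From mathcomp Require Import all_boot all_order all_algebra.
Set Implicit Arguments. Unset Strict Implicit. Unset Printing Implicit Defensive.

(* Column count c(m) of M_m (well defined: the maximal value of i*c(m-i) does
   not depend on which maximizer is chosen).  [k] is fuel; ncols m := ccols m m.
   c(3) = 4, c(4) = 7, c(m) = 3 + max_{2<=i<=m-3} i * c(m-i) for m >= 5.
   (Values for m < 3 are junk and never used.) *)
Fixpoint ccols (k m : nat) : nat :=
  match k with
  | 0 => 0
  | k'.+1 =>
    if m <= 3 then 4 else if m == 4 then 7
    else 3 + \max_(2 <= i < m - 2) (i * ccols k' (m - i))
  end.
Definition ncols (m : nat) : nat := ccols m m.

Definition f3 (r col : nat) : bool := (col == r) || (col == 3).

Definition f4 (r col : nat) : bool :=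
  if r == 0 then 3 <= col
  else if col < 3 then col == r.-1 else f3 r.-1 (col - 3).

(* M_m = [L | R] built from i, c and (the entry function g of) M_{m-i}. *)
Definition fstep (m i c : nat) (g : nat -> nat -> bool) (r col : nat) : bool :=
  if col < 3 then (m - 3 <= r) && (col == r - (m - 3))
  else if r < i then (col - 3) %/ c == r
  else g (r - i) ((col - 3) %% c).

(* Mrec m n f : f (restricted to m rows, n columns) is one of the possible
   matrices M_m, for some choice of maximizing indices at each recursion step. *)
Inductive Mrec : nat -> nat -> (nat -> nat -> bool) -> Prop :=
| Mrec3 : Mrec 3 4 f3
| Mrec4 : Mrec 4 7 f4
| MrecS (m i c : nat) (g : nat -> nat -> bool) :
    5 <= m -> 2 <= i -> i <= m - 3 ->
    (forall j, 2 <= j -> j <= m - 3 -> j * ncols (m - j) <= i * ncols (m - i)) ->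
    c = ncols (m - i) ->
    Mrec (m - i) c g ->
    Mrec m (3 + i * c) (fstep m i c g).

Definition mx_of (m n : nat) (f : nat -> nat -> bool) : 'M[bool]_(m, n) :=
  \matrix_(r < m, col < n) f r col.

Definition stopping_set (m n : nat) (M : 'M[bool]_(m, n)) (S : {set 'I_n}) : Prop :=
  S != set0 /\ forall r : 'I_m, #|[set j in S | M r j]| != 1.

(* d-decodable: s(M) >= d+1, i.e. every stopping set has size >= d+1
   (vacuous when there is no stopping set, s(M) = +oo). *)
Definition decodable (d m n : nat) (M : 'M[bool]_(m, n)) : Prop :=
  forall S : {set 'I_n}, stopping_set M S -> d < #|S|.

(* Main.v *)
Require Import Defs.
From mathcomp Require Import all_boot all_order all_algebra.
From mathcomp Require Import zify.
Set Implicit Arguments. Unset Strict Implicit. Unset Printing Implicit Defensive.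

Definition P1 m n (g : nat -> nat -> bool) :=
  forall a, a < n -> exists2 r, r < m & g r a.
Definition P2 m n (g : nat -> nat -> bool) :=
  forall a b x, a < n -> b < n -> a != b -> m - 3 <= x ->
  exists r, [/\ r < m, r != x & g r a != g r b].
Definition P3 m n (g : nat -> nat -> bool) :=
  forall a b c, a < n -> b < n -> c < n -> a != b -> a != c -> b != c ->
  exists2 r, r < m & g r a + g r b + g r c == 1.

Lemma P1_of_b m n (g : nat -> nat -> bool) :
  all (fun a => has (fun r => g r a) (iota 0 m)) (iota 0 n) -> P1 m n g.
Proof.
move=> /allP H a an; have aI : a \in iota 0 n by rewrite mem_iota.
have /hasP[r] := H a aI.
by rewrite mem_iota => /andP[_ rm] gr; exists r.
Qed.

Lemma P2_of_b m n (g : nat -> nat -> bool) :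
  all (fun a => all (fun b => all (fun x =>
     ((a != b) && (m - 3 <= x)) ==>
       has (fun r => (r != x) && (g r a != g r b)) (iota 0 m)) (iota 0 m.+1))
       (iota 0 n)) (iota 0 n) -> P2 m n g.
Proof.
move=> /allP H a b x an bn ab mx.
have aI : a \in iota 0 n by rewrite mem_iota.
have /allP/(_ b) := H a aI.
rewrite mem_iota => /(_ bn) /allP/(_ (minn x m)).
rewrite mem_iota => /(_ _) /implyP /(_ _) /hasP.
case=> [||r]; [lia|by apply/andP; split=> //; lia|].
rewrite mem_iota => /andP[_ rm] /andP[rx d].
exists r; split=> //; lia.
Qed.

Lemma P3_of_b m n (g : nat -> nat -> bool) :
  all (fun a => all (fun b => all (fun c =>
     [&& (a != b), (a != c) & (b != c)] ==>
       has (fun r => g r a + g r b + g r c == 1) (iota 0 m)) (iota 0 n))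
       (iota 0 n)) (iota 0 n) -> P3 m n g.
Proof.
move=> /allP H a b c an bn cn ab ac bc.
have aI : a \in iota 0 n by rewrite mem_iota.
have /allP/(_ b) := H a aI.
rewrite mem_iota => /(_ bn) /allP/(_ c).
rewrite mem_iota => /(_ cn) /implyP /(_ _) /hasP.
case=> [|r]; first by rewrite ab ac bc.
by rewrite mem_iota => /andP[_ rm] e; exists r.
Qed.

Lemma base3 : [/\ P1 3 4 f3, P2 3 4 f3 & P3 3 4 f3].
Proof. split. apply: P1_of_b. vm_compute. reflexivity.
apply: P2_of_b. vm_compute. reflexivity.
apply: P3_of_b. vm_compute. reflexivity. Qed.
Lemma base4 : [/\ P1 4 7 f4, P2 4 7 f4 & P3 4 7 f4].
Proof. split. apply: P1_of_b. vm_compute. reflexivity.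
apply: P2_of_b. vm_compute. reflexivity.
apply: P3_of_b. vm_compute. reflexivity. Qed.

Lemma P3_sorted m n (g : nat -> nat -> bool) :
  (forall a b c, a < b -> b < c -> c < n ->
     exists2 r, r < m & g r a + g r b + g r c == 1) -> P3 m n g.
Proof.
move=> H a b c an bn cn ab ac bc.
have [x [y [z [[xy yz zn] E]]]] : exists x y z, [/\ x < y, y < z & z < n] /\
   forall r, g r a + g r b + g r c = g r x + g r y + g r z.
  case: (ltngtP a b) => hab; case: (ltngtP a c) => hac; case: (ltngtP b c) => hbc;
  try lia.
  - by exists a, b, c; split => // r.
  - by exists a, c, b; split => // r; lia.
  - by exists c, a, b; split => // r; lia.
  - by exists b, a, c; split => // r; lia.
  - by exists b, c, a; split => // r; lia.
  - by exists c, b, a; split => // r; lia.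
have [r rm e] := H x y z xy yz zn.
by exists r => //; rewrite E.
Qed.

Ltac gen_fin k :=
  repeat match goal with H : context [_ %/ k] |- _ => revert H end;
  repeat match goal with |- context [?x %/ k] => let q := fresh "q" in generalize (x %/ k) => q end;
  repeat match goal with H : context [_ %% k] |- _ => clear H end;
  intros; lia.

Section Step.
Variables (m i k : nat) (g : nat -> nat -> bool).
Hypotheses (m5 : 5 <= m) (i1 : 1 <= i) (im : i <= m - 3).
Let h := fstep m i k g.
Let n := 3 + i * k.

Lemma fL r col : col < 3 -> h r col = (m - 3 <= r) && (col == r - (m - 3)).
Proof. by rewrite /h /fstep => ->. Qed.
Lemma fTop r col : r < i -> h r col = (3 <= col) && ((col - 3) %/ k == r).
Proof.
move=> ri; rewrite /h /fstep; case: ltnP => c3 /=.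
  by apply/negbTE; rewrite negb_and; apply/orP; left; rewrite -ltnNge; lia.
by rewrite ri.
Qed.
Lemma fB r col : 3 <= col -> i <= r -> h r col = g (r - i) ((col - 3) %% k).
Proof.
rewrite /h /fstep => c3 ir; have -> : (col < 3) = false by lia.
by have -> : (r < i) = false by lia.
Qed.

Lemma blk col : 3 <= col -> col < n -> 0 < k /\ (col - 3) %/ k < i /\ (col - 3) %% k < k.
Proof.
move=> c3 cn; have k0 : 0 < k by rewrite /n in cn; nia.
split=> //; split; last by rewrite ltn_pmod.
by rewrite ltn_divLR //; rewrite /n in cn; lia.
Qed.

Lemma same_blk a b : 3 <= a -> 3 <= b -> a != b ->
  (a - 3) %/ k = (b - 3) %/ k -> (a - 3) %% k != (b - 3) %% k.
Proof.
move=> a3 b3 ab q; apply/negP => /eqP t.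
have := divn_eq (a - 3) k; have := divn_eq (b - 3) k.
rewrite q t; move: ab; lia.
Qed.

Lemma stepP1 : P1 (m - i) k g -> P1 m n h.
Proof.
move=> _ a an; case: (ltnP a 3) => a3.
  by exists (m - 3 + a); [lia | rewrite fL //; apply/andP; split; lia].
have [_ [qa _]] := blk a3 an.
exists ((a - 3) %/ k); first lia.
by rewrite fTop ?a3 ?eqxx //; lia.
Qed.

Lemma stepP2 : P2 (m - i) k g -> P2 m n h.
Proof.
move=> H2 a b x an bn ab mx.
case: (ltnP a 3) => a3; case: (ltnP b 3) => b3.
- case: (eqVneq x (m - 3 + a)) => xa.
    by exists (m - 3 + b); rewrite !fL //; split; lia.
  by exists (m - 3 + a); rewrite !fL //; split; lia.
- have [_ [qb _]] := blk b3 bn.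
  by exists ((b - 3) %/ k); rewrite !fTop; try lia; split; try lia.
- have [_ [qa _]] := blk a3 an.
  by exists ((a - 3) %/ k); rewrite !fTop; try lia; split; try lia.
- have [k0 [qa ta]] := blk a3 an; have [_ [qb tb]] := blk b3 bn.
  case: (eqVneq ((a - 3) %/ k) ((b - 3) %/ k)) => q.
    have tab := same_blk a3 b3 ab q.
    have mx' : m - i - 3 <= x - i by lia.
    have [r [rm rx d]] := H2 _ _ (x - i) ta tb tab mx'.
    exists (r + i); rewrite !fB; try lia; split; try lia.
    by rewrite addnK.
  by exists ((a - 3) %/ k); rewrite !fTop; try lia; split; try lia.
Qed.

Lemma stepP3 : P2 (m - i) k g -> P3 (m - i) k g -> P3 m n h.
Proof.
move=> H2 H3; apply: P3_sorted => a b c ab bc cn.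
have an : a < n by lia.
have bn : b < n by lia.
case: (ltnP c 3) => c3.
  by exists (m - 3 + a); [lia | rewrite !fL //; lia].
case: (ltnP b 3) => b3.
  have [_ [qc _]] := blk c3 cn.
  by exists ((c - 3) %/ k); [gen_fin k | rewrite !fTop //; gen_fin k].
have [k0 [qb tb]] := blk b3 bn; have [_ [qc tc]] := blk c3 cn.
have bcn : b != c by lia.
case: (ltnP a 3) => a3.
  case: (eqVneq ((b - 3) %/ k) ((c - 3) %/ k)) => q.
    have tbc := same_blk b3 c3 bcn q.
    have mx' : m - i - 3 <= m - 3 + a - i by lia.
    have [r [rm rx d]] := H2 _ _ _ tb tc tbc mx'.
    exists (r + i); first by clear -rm im m5; lia.
    rewrite fL // !fB; try lia.
    rewrite addnK.
    have -> : (m - 3 <= r + i) && (a == r + i - (m - 3)) = false.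
      by clear -rx im m5; lia.
    by move: d; case: (g r _); case: (g r _).
  by exists ((b - 3) %/ k); [gen_fin k | rewrite !fTop //; gen_fin k].
have [_ [qa ta]] := blk a3 an.
have abn : a != b by lia.
have acn : a != c by lia.
case: (eqVneq ((a - 3) %/ k) ((b - 3) %/ k)) => qab.
  case: (eqVneq ((a - 3) %/ k) ((c - 3) %/ k)) => qac.
    have tab := same_blk a3 b3 abn qab.
    have tac := same_blk a3 c3 acn qac.
    have tbc := same_blk b3 c3 bcn (etrans (esym qab) qac).
    have [r rm e] := H3 _ _ _ ta tb tc tab tac tbc.
    exists (r + i); first by clear -rm im m5; lia.
    by rewrite !fB ?addnK ?leq_addl.
  by exists ((c - 3) %/ k); [gen_fin k | rewrite !fTop //; gen_fin k].
case: (eqVneq ((a - 3) %/ k) ((c - 3) %/ k)) => qac.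
  by exists ((b - 3) %/ k); [gen_fin k|rewrite !fTop //; gen_fin k].
by exists ((a - 3) %/ k); [gen_fin k|rewrite !fTop //; gen_fin k].
Qed.
End Step.

Lemma allP123 m n f : Mrec m n f -> [/\ 3 <= m, P1 m n f, P2 m n f & P3 m n f].
Proof.
elim=> [|| m' i c g m5 i2 im _ -> _ [h3 h1 h2 h3']].
- by have [*] := base3.
- by have [*] := base4.
have i1 : 1 <= i by lia.
split; first lia.
- exact: stepP1.
- exact: stepP2.
- exact: stepP3.
Qed.

Lemma card_sel (n : nat) (p : 'I_n -> bool) (S : {set 'I_n}) :
  #|[set j in S | p j]| = \sum_(j in S) p j.
Proof.
rewrite -sum1_card (eq_bigl (fun j => (j \in S) && p j)); last first.
  by move=> j; rewrite inE.
rewrite big_mkcondr /=; apply: eq_bigr => j _; by case: (p j).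
Qed.

Lemma dec_of m n f : 3 <= m -> P1 m n f -> P2 m n f -> P3 m n f ->
  decodable 3 (mx_of m n f).
Proof.
move=> m3 H1 H2 H3 S [S0 H]; rewrite ltnNge; apply/negP => S3.
have HS : forall r : 'I_m, \sum_(j in S) f r j != 1.
  move=> r; have := H r; rewrite card_sel.
  by under eq_bigr => j _ do rewrite mxE.
have [a aS] := set0Pn _ S0.
have ca := cardsD1 a S; rewrite aS in ca.
case: (eqVneq (S :\ a) set0) => Sa.
  have [r rm fa] := H1 a (ltn_ord a).
  have := HS (Ordinal rm); rewrite (big_setD1 a aS) Sa big_set0 /= fa.
  by [].
have [b bS] := set0Pn _ Sa.
have cardb := cardsD1 b (S :\ a); rewrite bS in cardb.
have ab : (val a != val b).
  by move: bS; rewrite !inE => /andP[ba _]; rewrite eq_sym.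
case: (eqVneq (S :\ a :\ b) set0) => Sb.
  have [r [rm _ d]] := H2 _ _ m (ltn_ord a) (ltn_ord b) ab (leq_subr _ _).
  have := HS (Ordinal rm); rewrite (big_setD1 a aS) (big_setD1 b bS) Sb big_set0 /=.
  by move: d; case: (f r a); case: (f r b).
have [c cS] := set0Pn _ Sb.
have cc := cardsD1 c (S :\ a :\ b); rewrite cS in cc.
have Sc : S :\ a :\ b :\ c = set0.
  by apply/eqP; rewrite -cards_eq0; lia.
have := cS; rewrite !inE => /and3P[cb ca' _].
have ac : val a != val c by rewrite eq_sym.
have bc : val b != val c by rewrite eq_sym.
have [r rm e] := H3 _ _ _ (ltn_ord a) (ltn_ord b) (ltn_ord c) ab ac bc.
have := HS (Ordinal rm).
rewrite (big_setD1 a aS) (big_setD1 b bS) (big_setD1 c cS) Sc big_set0 /= addn0.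
by rewrite addnA e.
Qed.

Theorem lemma5p3 (m n : nat) (f : nat -> nat -> bool) :
  3 <= m -> Mrec m n f -> decodable 3 (mx_of m n f).
Proof.
move=> _ /allP123 [m3 H1 H2 H3]; exact: dec_of.
Qed.
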